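(* Let $(L,\wedge,\vee,0,1)$ be a bounded lattice and for $x,y\in L$ set $x\boxplus y:=\{z\in L\mid x\vee y=x\vee z=z\vee y\}$. Then $(L,\boxplus,0)$ is a commutative, total and reproductive mosaic, in which the inverse of each $x\in L$ is $x$ itself. Moreover, $1$ is the unique element $u\in L$ such that for all $x\in L$: $u\in x\boxplus x$ implies $x=u$.
   Context: A multioperation on a set $A$ is a function $\boxplus:A\times A\to\wp(A)$; for $x\in A$ and $Y\subseteq A$, $x\boxplus Y:=\bigcup_{y\in Y}x\boxplus y$. It is total if $x\boxplus y\ne\emptyset$ for all $x,y$; commutative if $x\boxplus y=y\boxplus x$; reproductive if $x\boxplus A=A$ for all $x\in A$. A neutral element $e$ satisfies $e\boxplus x=x\boxplus e=\{x\}$ for all $x$. For an endofunction $\rho$, $\rho$-reversibility means: $z\in x\boxplus y$ implies $x\in z\boxplus\rho(y)$ and $y\in\rho(x)\boxplus z$. A mosaic $(A,\boxplus,e)$ is a set with a multioperation with neutral element $e$ that is $\rho$-reversible for some endofunction $\rho$. An inverse of $x$ is an element $y$ with $e\in(x\boxplus y)\cap(y\boxplus x)$. *)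

(* Defs.v *)
From HB Require Import structures.
From mathcomp Require Import all_boot all_order.
Set Implicit Arguments. Unset Strict Implicit. Unset Printing Implicit Defensive.
Import Order.TTheory.
Local Open Scope order_scope.

(* A multioperation on A: [m x y z] means  z \in x [+] y.
   Subsets of A are represented as predicates A -> Prop. *)
Definition multiop (A : Type) := A -> A -> A -> Prop.

Section Mosaic.
Variables (A : Type) (m : multiop A).

Definition mop_total : Prop := forall x y : A, exists z, m x y z.

Definition mop_commutative : Prop := forall x y z : A, m x y z <-> m y x z.

(* x [+] A = \bigcup_{y in A} x [+] y = A *)
Definition mop_reproductive : Prop := forall x w : A, exists y, m x y w.

Definition mop_neutral (e : A) : Prop :=
  forall x z : A, (m e x z <-> z = x) /\ (m x e z <-> z = x).

Definition mop_reversible (rho : A -> A) : Prop :=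
  forall x y z : A, m x y z -> m z (rho y) x /\ m (rho x) z y.

Definition is_mosaic (e : A) : Prop :=
  mop_neutral e /\ exists rho : A -> A, mop_reversible rho.

Definition mop_inverse (e x y : A) : Prop := m x y e /\ m y x e.

End Mosaic.

Definition lat_mop (d : Order.disp_t) (L : latticeType d) : multiop L :=
  fun x y z => x `|` y = x `|` z /\ x `|` z = z `|` y.

(* Main.v *)
Require Import Defs.
From mathcomp Require Import all_boot all_order.
Local Open Scope order_scope.
Import Order.TTheory.

Theorem mainTheorem4 (d : Order.disp_t) (L : tbLatticeType d) :
  is_mosaic (@lat_mop d L) \bot
  /\ mop_commutative (@lat_mop d L)
  /\ mop_total (@lat_mop d L)
  /\ mop_reproductive (@lat_mop d L)
  /\ (forall x y : L, mop_inverse (@lat_mop d L) \bot x y <-> y = x)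
  /\ (forall x : L, lat_mop x x \top -> x = \top)
  /\ (forall u : L, (forall x : L, lat_mop x x u -> x = u) -> u = \top).
Proof.
have E : forall x y z : L, lat_mop x y z = (x `|` y = x `|` z /\ x `|` z = y `|` z).
  by move=> x y z; rewrite /lat_mop [z `|` y]joinC.
split; [split|split; [|split; [|split; [|split; [|split]]]]].
- move=> x z; rewrite !E !join0x !joinx0; split; split.
  + by case=> -> _.
  + by move=> ->; rewrite joinxx.
  + by case=> h1 h2; rewrite -h2 -h1.
  + by move=> ->; rewrite joinxx.
- exists id => x y z; rewrite !E /= => -[h1 h2].
  rewrite ?(joinC z x) ?(joinC z y) ?(joinC y x) in h1 h2 *.
  by rewrite -h2 -h1.
- move=> x y z; rewrite !E; split => -[h1 h2].
  + rewrite ?(joinC z x) ?(joinC z y) ?(joinC y x) in h1 h2 *.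
    by rewrite -h2 -h1.
  + rewrite ?(joinC z x) ?(joinC z y) ?(joinC y x) in h1 h2 *.
    by rewrite -h2 -h1.
- move=> x y; exists (x `|` y); rewrite E; split.
  + by rewrite joinA joinxx.
  + by rewrite joinA joinxx (joinC y (x `|` y)) -joinA joinxx.
- move=> x w; exists (x `|` w); rewrite E; split.
  + by rewrite joinA joinxx.
  + by rewrite -joinA joinxx.
- move=> x y; rewrite /mop_inverse !E !joinx0; split.
  + by case=> -[h1 h2] [h3 h4]; rewrite -h3 joinC h1.
  + by move=> ->; rewrite joinxx.
- by move=> x; rewrite E joinx1 joinxx => -[<-].
- move=> u H; have := H \top; rewrite E !join1x => h; by rewrite h.
Qed.
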